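(* For integers $N\ge 3$ and $\Omega\in[-\pi,\pi)$ with $\Omega \notin \{0, 2\pi/N\}$, define $$Z(\Omega) = \frac{|\sin(N\Omega/2)|}{N}\left|\frac{1}{\sin(\Omega/2)} - \frac{1}{\sin(\Omega/2 - \pi/N)}\right| .$$ Let $\Omega$ be uniformly distributed on $[-\pi,\pi)\setminus[-0.5\pi/N,\,2.5\pi/N]$. Then there exist constants $C>0$ and $N_0$ (independent of $N$) such that $\mathbb E[Z(\Omega)^2] \le C/N$ for all $N \ge N_0$.
   Context: The quantity $Z(\Omega)$ is the magnitude of the output of a fixed two-tap correlator applied to the responses $[D_N(\Omega), D_N(\Omega-2\pi/N)]$ of an interferer at spatial frequency $\Omega$ in two adjacent DFT bins, where $D_N(\omega)=\frac1N\sum_{k=0}^{N-1}e^{j\omega k}$. *)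

(* Defs.v *)
From Stdlib Require Import Reals.
From Coquelicot Require Import Coquelicot.
Open Scope R_scope.

Definition Zfun (N : nat) (w : R) : R :=
  Rabs (sin (INR N * w / 2)) / INR N *
  Rabs (/ sin (w / 2) - / sin (w / 2 - PI / INR N)).

(* Support of the uniform law: [-pi, pi) \ [-0.5 pi/N, 2.5 pi/N]
   = [-pi, -pi/(2N)) u (5pi/(2N), pi), of total length 2 pi - 3 pi / N. *)
Definition support_length (N : nat) : R := 2 * PI - 3 * PI / INR N.

(* E[f(Omega)] for Omega uniform on the support above: integral of f over
   the support divided by its length (endpoints are Lebesgue-null). *)
Definition uniform_expect (N : nat) (f : R -> R) : R :=
  (RInt f (- PI) (- (PI / (2 * INR N))) + RInt f (5 * PI / (2 * INR N)) PI)
  / support_length N.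

(* Main.v *)
Require Import Defs.
From Stdlib Require Import Reals.
From Coquelicot Require Import Coquelicot.
From Stdlib Require Import Lra.
Open Scope R_scope.
Lemma sin_lb4 a : 0 <= a -> a <= 2 -> a/4 <= sin a.
Proof. intros. assert (H1 := PI2_1). destruct (SIN a) as [H2 _]; try lra.
assert (E: sin_lb a = a - a^3/6 + a^5/120 - a^7/5040) by (unfold sin_lb, sin_approx, sin_term; simpl; field).
rewrite E in H2.
assert (a^2 <= 4) by nra. assert (0 <= a^5/120) by (apply Rmult_le_pos; [apply pow_le|]; lra).
assert (a^7 <= 64 * a) by (replace (a^7) with ((a^2)^3*a) by ring; assert (0<=a^2) by nra; 
  assert ((a^2)^3 <= 64) by (replace 64 with (4^3) by ring; apply pow_incr; lra); nra).
assert (a^3 <= 4*a) by (replace (a^3) with (a^2*a) by ring; nra).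
lra. Qed.
Definition F (c w : R) := -2 * cos (w/2-c) / sin(w/2-c).
Lemma ftc_inv2 c a b : a <= b -> (forall w, a <= w <= b -> sin (w/2 - c) <> 0) ->
  is_RInt (fun w => (/ sin (w/2 - c))^2) a b (F c b - F c a).
Proof.
intros hab hs.
replace (F c b - F c a) with (minus (F c b) (F c a)) by reflexivity.
apply (is_RInt_derive (F c) (fun w => (/ sin (w/2 - c))^2)); rewrite Rmin_left, Rmax_right by lra; intros x hx.
- unfold F. auto_derive. now apply hs.
  assert (hsx := hs x hx). assert (hp := sin2_cos2 (x/2 - c)). unfold Rsqr in hp.
  replace (x * / 2 + - c) with (x/2 - c) by (unfold Rdiv; ring).
  set (s := sin (x/2 - c)) in *. set (co := cos (x/2-c)) in *.
  replace ((/s)^2) with ((s*s+co*co)/(s*s)) by (rewrite hp; field; auto). field. auto.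
- apply (ex_derive_continuous (K:=R_AbsRing) (V:=R_NormedModule)). auto_derive. now apply hs.
Qed.
Lemma Zsq N w : 0 < INR N -> Zfun N w ^ 2 =
  (sin (INR N * w / 2) / INR N * (/ sin (w/2) - / sin (w/2 - PI / INR N)))^2.
Proof.
intros hN. unfold Zfun. rewrite <- (pow2_abs (sin _ / _ * _)). f_equal.
unfold Rdiv. rewrite !Rabs_mult, Rabs_inv, (Rabs_right (INR N)) by lra. reflexivity.
Qed.

Lemma int_bound N a b : 0 < INR N -> a <= b ->
  (forall w, a <= w <= b -> sin (w/2 - 0) <> 0) ->
  (forall w, a <= w <= b -> sin (w/2 - PI / INR N) <> 0) ->
  RInt (fun w => Zfun N w ^ 2) a b <=
  2 / (INR N)^2 * ((F 0 b - F 0 a) + (F (PI / INR N) b - F (PI / INR N) a)).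
Proof.
intros hN hab h0 hc.
assert (H0 := ftc_inv2 0 a b hab h0). assert (Hc := ftc_inv2 _ a b hab hc).
assert (Hg := is_RInt_scal _ _ _ (2/(INR N)^2) _ (is_RInt_plus _ _ _ _ _ _ H0 Hc)).
assert (E : 2/(INR N)^2 * ((F 0 b - F 0 a) + (F (PI / INR N) b - F (PI / INR N) a)) = RInt (fun y => scal (2/INR N^2) (plus ((/ sin (y/2-0))^2) ((/ sin (y/2 - PI/INR N))^2))) a b) by (symmetry; apply is_RInt_unique; exact Hg).
rewrite E.
apply RInt_le; [lra| | eexists; exact Hg |].
- apply (ex_RInt_ext (fun w => (sin (INR N * w / 2) / INR N * (/ sin (w/2) - / sin (w/2 - PI / INR N)))^2)).
  + intros x _. now rewrite Zsq.
  + apply (ex_RInt_continuous (V:=R_CompleteNormedModule)). rewrite Rmin_left, Rmax_right by lra. intros x hx.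
    apply (ex_derive_continuous (K:=R_AbsRing) (V:=R_NormedModule)). auto_derive.
    split; [|split; [|exact I]].
    * assert (h := h0 x hx). replace (x/2 - 0) with (x * / 2) in h by (unfold Rdiv; ring). exact h.
    * assert (h := hc x hx). replace (x/2 - PI / INR N) with (x * / 2 + - (PI / INR N)) in h by (unfold Rdiv; ring). exact h.
- intros x hx. rewrite Zsq by lra. simpl. unfold scal, plus; simpl. unfold mult; simpl.
  rewrite Rminus_0_r.
  set (u := / sin (x/2)). set (v := / sin (x / 2 - PI / INR N)). set (s := sin (INR N * x / 2)).
  assert (s^2 <= 1) by (assert (h1 := SIN_bound (INR N * x / 2)); fold s in h1; nra).
  assert ((u-v)^2 <= 2*(u^2+v^2)) by (assert (h := pow2_ge_0 (u+v)); nra).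
  assert (0 <= (u-v)^2) by apply pow2_ge_0.
  replace ((s / INR N * (u - v))^2) with (s^2 * ((u-v)^2 / (INR N)^2)) by (field; lra).
  assert (0 < INR N ^2) by nra.
  assert (s^2 * ((u-v)^2 / (INR N)^2) <= (u-v)^2 / (INR N)^2).
  { rewrite <- (Rmult_1_l ((u-v)^2 / INR N ^2)) at 2. apply Rmult_le_compat_r; [|lra].
    apply Rmult_le_pos; [lra| apply Rlt_le, Rinv_0_lt_compat; lra]. }
  apply Rle_trans with ((u-v)^2/INR N^2); [replace (s / INR N * (u - v) * (s / INR N * (u - v) * 1)) with (s^2 * ((u-v)^2 / INR N^2)) by (field; lra); exact H4|].
  assert (0 < / INR N ^2) by (apply Rinv_0_lt_compat; lra).
  unfold Rdiv. replace (INR N * (INR N * 1)) with (INR N ^2) by ring. replace (u * (u * 1) + v * (v * 1)) with (u^2+v^2) by ring. nra.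
Qed.
Lemma Fbound c w s : 0 < s -> s <= Rabs (sin (w/2 - c)) -> Rabs (F c w) <= 2/s.
Proof.
intros hs h. unfold F. assert (hc := COS_bound (w/2-c)).
assert (0 < Rabs (sin (w/2-c))) by lra.
assert (sin (w/2-c) <> 0) by (intro e; rewrite e, Rabs_R0 in H; lra).
unfold Rdiv. rewrite !Rabs_mult, Rabs_inv.
assert (Rabs (cos (w/2-c)) <= 1) by (apply Rabs_le; lra).
replace (Rabs (-2)) with 2 by (rewrite Rabs_left; lra).
apply Rle_trans with (2 * 1 * / Rabs (sin (w / 2 - c))).
- apply Rmult_le_compat_r. apply Rlt_le, Rinv_0_lt_compat; lra.
  assert (0 <= Rabs (cos (w/2-c))) by apply Rabs_pos. nra.
- rewrite Rmult_1_r. apply Rmult_le_compat_l; [lra|]. apply Rinv_le_contravar; lra.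
Qed.

Lemma diff_le x y : x - y <= Rabs x + Rabs y.
Proof. assert (h1 := RRle_abs x). assert (h2 := Rabs_maj2 y). lra. Qed.

Lemma endpoint_sum n p : 3 <= n -> p * n = PI ->
 (F 0 (-(p/2)) - F 0 (-PI)) + (F p (-(p/2)) - F p (-PI)) +
 ((F 0 PI - F 0 (5*p/2)) + (F p PI - F p (5*p/2))) <= 56 * n.
Proof.
intros hn hpn. assert (hPI := PI2_1). assert (hPI4 := PI_4).
assert (hp0 : 0 < p) by nra.
assert (hp3 : 3 * p <= PI) by nra.
assert (hp2 : 2 < p * n) by lra.
assert (s1 : p/16 <= sin (p/4)) by (assert (h := sin_lb4 (p/4)); lra).
assert (s2 : 5*p/16 <= sin (5*p/4)) by (assert (h := sin_lb4 (5*p/4)); lra).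
assert (s3 : 1/12 <= cos p).
{ rewrite <- sin_shift. assert (h := sin_lb4 (PI/2 - p)). lra. }
assert (e1 : Rabs (F 0 (-(p/2))) <= 2/(p/16)).
{ apply Fbound; [lra|]. replace (-(p/2)/2 - 0) with (-(p/4)) by field.
  rewrite sin_neg, Rabs_Ropp, Rabs_right; lra. }
assert (e2 : Rabs (F 0 (-PI)) <= 2/1).
{ apply Fbound; [lra|]. replace (-PI/2 - 0) with (-(PI/2)) by field.
  rewrite sin_neg, Rabs_Ropp, sin_PI2, Rabs_R1; lra. }
assert (e3 : Rabs (F p (-(p/2))) <= 2/(5*p/16)).
{ apply Fbound; [lra|]. replace (-(p/2)/2 - p) with (-(5*p/4)) by field.
  rewrite sin_neg, Rabs_Ropp, Rabs_right; lra. }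
assert (e4 : Rabs (F p (-PI)) <= 2/(1/12)).
{ apply Fbound; [lra|]. replace (-PI/2 - p) with (-(PI/2 - -p)) by field.
  rewrite sin_neg, Rabs_Ropp, sin_shift, cos_neg, Rabs_right; lra. }
assert (e5 : Rabs (F 0 PI) <= 2/1).
{ apply Fbound; [lra|]. replace (PI/2 - 0) with (PI/2) by field.
  rewrite sin_PI2, Rabs_R1; lra. }
assert (e6 : Rabs (F 0 (5*p/2)) <= 2/(5*p/16)).
{ apply Fbound; [lra|]. replace (5*p/2/2 - 0) with (5*p/4) by field.
  rewrite Rabs_right; lra. }
assert (e7 : Rabs (F p PI) <= 2/(1/12)).
{ apply Fbound; [lra|]. rewrite sin_shift, Rabs_right; lra. }
assert (e8 : Rabs (F p (5*p/2)) <= 2/(p/16)).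
{ apply Fbound; [lra|]. replace (5*p/2/2 - p) with (p/4) by field.
  rewrite Rabs_right; lra. }
assert (d1 := diff_le (F 0 (-(p/2))) (F 0 (-PI))).
assert (d2 := diff_le (F p (-(p/2))) (F p (-PI))).
assert (d3 := diff_le (F 0 PI) (F 0 (5*p/2))).
assert (d4 := diff_le (F p PI) (F p (5*p/2))).
assert (k1 : 2/(p/16) = 32/p) by (field; lra).
assert (k2 : 2/(5*p/16) = 32/(5*p)) by (field; lra).
rewrite k1 in e1, e8. rewrite k2 in e3, e6.
assert (k3 : 32/p <= 16 * n).
{ apply (Rmult_le_reg_r p); [lra|]. unfold Rdiv. rewrite Rmult_assoc, Rinv_l by lra. nra. }
assert (k4 : 32/(5*p) <= 16/5 * n).
{ apply (Rmult_le_reg_r (5*p)); [lra|]. unfold Rdiv. rewrite Rmult_assoc, Rinv_l by lra. nra. }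
lra.
Qed.

Theorem mainTheorem7 :
  exists (C : R) (N0 : nat), 0 < C /\
    forall N : nat, (3 <= N)%nat -> (N0 <= N)%nat ->
      uniform_expect N (fun w => (Zfun N w) ^ 2) <= C / INR N.
Proof.
exists 112, 3%nat. split; [lra|]. intros N hN _.
assert (hn : 3 <= INR N) by (replace 3 with (INR 3) by (simpl; ring); now apply le_INR).
assert (hPI := PI2_1).
assert (hp0 : 0 < PI / INR N) by (apply Rdiv_lt_0_compat; lra).
assert (hpn : PI / INR N * INR N = PI) by (field; lra).
assert (hp3 : 3 * (PI / INR N) <= PI) by nra.
unfold uniform_expect, support_length.
replace (PI / (2 * INR N)) with (PI / INR N / 2) by (field; lra).
replace (5 * PI / (2 * INR N)) with (5 * (PI / INR N) / 2) by (field; lra).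
replace (3 * PI / INR N) with (3 * (PI / INR N)) by (field; lra).
assert (I1 := int_bound N (-PI) (-(PI / INR N / 2)) ltac:(lra) ltac:(lra)).
assert (I2 := int_bound N (5 * (PI / INR N) / 2) PI ltac:(lra) ltac:(lra)).
set (p := PI / INR N) in *.
assert (S := endpoint_sum (INR N) p hn hpn).
assert (A : RInt (fun w => Zfun N w ^ 2) (-PI) (-(p/2)) <=
   2 / INR N ^ 2 * (F 0 (-(p/2)) - F 0 (-PI) + (F p (-(p/2)) - F p (-PI)))).
{ apply I1.
  - intros w hw. apply Rlt_not_eq, sin_lt_0_var; lra.
  - intros w hw. apply Rlt_not_eq, sin_lt_0_var; lra. }
assert (B : RInt (fun w => Zfun N w ^ 2) (5*p/2) PI <=
   2 / INR N ^ 2 * (F 0 PI - F 0 (5*p/2) + (F p PI - F p (5*p/2)))).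
{ apply I2.
  - intros w hw. apply Rgt_not_eq, sin_gt_0; lra.
  - intros w hw. apply Rgt_not_eq, sin_gt_0; lra. }
assert (k : 2 / INR N ^ 2 * (56 * INR N) = 112 / INR N) by (field; lra).
assert (h2 : 0 < 2 / INR N ^ 2) by (apply Rdiv_lt_0_compat; nra).
set (I := RInt (fun w => Zfun N w ^ 2) (-PI) (-(p/2)) + RInt (fun w => Zfun N w ^ 2) (5*p/2) PI).
assert (hI : I <= 112 / INR N) by (unfold I; rewrite <- k; nra).
assert (hL : 1 <= 2 * PI - 3 * p) by lra.
assert (hC : 0 < 112 / INR N) by (apply Rdiv_lt_0_compat; lra).
unfold Rdiv at 1. 
assert (0 < / (2 * PI - 3 * p) <= 1).
{ split. apply Rinv_0_lt_compat; lra. rewrite <- Rinv_1. apply Rinv_le_contravar; lra. }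
destruct (Rle_lt_dec 0 I); nra.
Qed.
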